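(* For $N>0$ let $\mathcal{R}_N=\{(x,y)\in\mathbb{R}^2:|A(x,y)|\le(N/4)^{1/3},\ |B(x,y)|\le(N/27)^{1/2}\}$ and $V=\mathrm{Vol}(\mathcal{R}_1)$. Then $\mathcal{R}_N=\{(N^{\frac{\tau}{6\varsigma}}x,N^{\frac{1}{6\varsigma}}y):(x,y)\in\mathcal{R}_1\}$, $\mathcal{R}_1$ is bounded, and $\mathrm{Vol}(\mathcal{R}_N)=N^{\frac{\tau+1}{6\varsigma}}V$. In particular every $(x,y)\in\mathcal{R}_N$ satisfies $x\ll N^{\frac{\tau}{6\varsigma}}$ and $y\ll N^{\frac{1}{6\varsigma}}$, with implied constants depending only on $\mathcal{R}_1$.
   Context: Fix $\upsilon\in\{1,2\}$ and positive integers $m,\tau$ with $m=1$ or $\upsilon\tau=1$. Let $f,g\in\mathbb{Z}[t]$ with $4f^3+27g^2\ne0$, no common real root, and $\max\{\frac12\deg f,\frac13\deg g\}=\frac{2m}{\upsilon\tau}$. Let $\varsigma=2m$ if $\upsilon=1$, $\varsigma=1$ if $\upsilon=2$; $A(x,y)=y^{2\varsigma}f(x/y^\tau)$, $B(x,y)=y^{3\varsigma}g(x/y^\tau)\in\mathbb{Z}[x,y]$. *)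

(* Defs.v *)
From HB Require Import structures.
From mathcomp Require Import all_boot all_order all_algebra.
From mathcomp Require Import all_classical all_reals all_analysis.
Set Implicit Arguments. Unset Strict Implicit. Unset Printing Implicit Defensive.
Import Order.TTheory GRing.Theory Num.Theory.
Local Open Scope classical_set_scope.
Local Open Scope ring_scope.

Definition pdeg (p : {poly int}) : rat := ((size p).-1)%:R.

(* max{ deg f / 2, deg g / 3 }, with the convention deg 0 = -oo
   (f = g = 0 is excluded by 4f^3+27g^2 <> 0) *)
Definition maxdeg (f g : {poly int}) : rat :=
  if f == 0 then pdeg g / 3%:R
  else if g == 0 then pdeg f / 2%:R
  else Num.max (pdeg f / 2%:R) (pdeg g / 3%:R).

Definition vsig (u m : nat) : nat := if u == 1%N then (2 * m)%N else 1%N.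

(* The polynomial y^(k*s) p(x / y^t), written as the bivariate polynomial
   sum_i p_i x^i y^(k*s - t*i) and evaluated at real (x, y).  Under the
   degree hypothesis, k*s - t*i >= 0 for every i <= deg p, so this is the
   genuine element of Z[x,y] (and equals y^(k*s) p(x/y^t) whenever y <> 0). *)
Definition homog {R : realType} (k s t : nat) (p : {poly int}) (x y : R) : R :=
  \sum_(i < size p) (p`_i)%:~R * x ^+ i * y ^+ (k * s - t * i).

Definition Aform {R : realType} (s t : nat) (f : {poly int}) (x y : R) : R :=
  homog 2 s t f x y.
Definition Bform {R : realType} (s t : nat) (g : {poly int}) (x y : R) : R :=
  homog 3 s t g x y.

Definition regionN {R : realType} (s t : nat) (f g : {poly int}) (N : R)
  : set (R * R) :=
  [set p | `|Aform s t f p.1 p.2| <= (N / 4) `^ (1 / 3)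
         /\ `|Bform s t g p.1 p.2| <= (N / 27) `^ (1 / 2)].

Definition Vol {R : realType} (A : set (R * R)) : \bar R :=
  ((@lebesgue_measure R) \x (@lebesgue_measure R))%E A.

(* Main.v *)
Require Import Defs.
From HB Require Import structures.
From mathcomp Require Import all_boot all_order all_algebra.
From mathcomp Require Import all_classical all_reals all_analysis.
From mathcomp Require Import ring lra zify.
Import Order.TTheory GRing.Theory Num.Theory.
Local Open Scope classical_set_scope.
Local Open Scope ring_scope.

Section S1.
Context {R : realType}.
Lemma pow_bound (z C : R) n : 0 <= z -> (0 < n)%N -> z ^+ n <= C -> z <= 1 + `|C|.
Proof.
move=> z0 n0 h.
have [z1|z1] := leP z 1.
  by apply: le_trans z1 _; rewrite lerDl.
apply: le_trans (ler_eXnr n0 (ltW z1)) _.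
apply: le_trans h _; apply: le_trans (ler_norm C) _; rewrite lerDr //.
Qed.

Lemma poly_growth (P : {poly R}) n : size P = n.+2 ->
  exists2 K, 1 <= K & forall r, K <= `|r| ->
    `|lead_coef P| / 2 * `|r| ^+ n.+1 <= `|P.[r]|.
Proof.
move=> sP.
have l0 : 0 < `|lead_coef P|.
  by rewrite normr_gt0 lead_coef_eq0 -size_poly_eq0 sP.
pose l : R := `|lead_coef P|. rewrite -/l in l0.
pose S : R := \sum_(i < n.+1) `|P`_i|.
have S0 : 0 <= S by apply: sumr_ge0 => i _.
exists (1 + 2 * S / l); first by rewrite lerDl divr_ge0 // ?mulr_ge0 // ltW.
move=> r hr.
have r1 : 1 <= `|r| by apply: le_trans hr; rewrite lerDl divr_ge0 // ?mulr_ge0 // ltW.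
have hS : S <= l / 2 * `|r|.
  have : 2 * S / l <= `|r| by apply: le_trans hr; rewrite lerDr.
  rewrite ler_pdivrMr // => h.
  lra.
rewrite horner_coef sP big_ord_recr /=.
have -> : P`_n.+1 = lead_coef P by rewrite lead_coefE sP.
set Q := \sum_(i < n.+1) _.
have hQ : `|Q| <= S * `|r| ^+ n.
  apply: le_trans (ler_norm_sum _ _ _) _.
  rewrite /S mulr_suml; apply: ler_sum => i _.
  rewrite normrM normrX; apply: ler_wpM2l; first exact: normr_ge0.
  by apply: ler_weXn2l => //; rewrite -ltnS.
have h1 : `|lead_coef P * r ^+ n.+1| <= `|Q + lead_coef P * r ^+ n.+1| + `|Q|.
  have := ler_normB (Q + lead_coef P * r ^+ n.+1) Q.
  by rewrite addrC addKr.
move: h1; rewrite normrM normrX exprS -/l => h1.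
have h3 : S * `|r| ^+ n <= l / 2 * `|r| * `|r| ^+ n.
  by apply: ler_wpM2r => //; rewrite exprn_ge0.
rewrite exprS.
have h4 : 0 <= `|r| ^+ n by rewrite exprn_ge0.
have fin : forall l a b S Q X : R, 0 <= b -> l * (a * b) <= X + Q -> Q <= S * b ->
  S * b <= l / 2 * a * b -> l / 2 * (a * b) <= X.
  by move=> *; lra.
rewrite -[r * r ^+ n]exprS.
exact: (fin _ _ _ _ _ _ h4 h1 hQ h3).
Qed.
Lemma homog_scale k s t (p : {poly int}) (l x y : R) : (t * (size p).-1 <= k * s)%N ->
  homog k s t p (l ^+ t * x) (l * y) = l ^+ (k * s) * homog k s t p x y.
Proof.
move=> hd; rewrite /homog mulr_sumr; apply: eq_bigr => i _.
have hi : (t * i <= k * s)%N.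
  apply: leq_trans hd; rewrite leq_mul2l; apply/orP; right.
  by rewrite -ltnS prednK ?ltn_ord // (leq_ltn_trans _ (ltn_ord i)).
rewrite !exprMn -!exprM.
rewrite [in RHS](_ : (k * s)%N = (t * i + (k * s - t * i))%N); last by rewrite subnKC.
rewrite exprD addKn; ring.
Qed.

Lemma homog_y1 k s t (p : {poly int}) (x : R) : homog k s t p x 1 = (map_poly intr p).[x].
Proof.
rewrite /homog horner_coef size_map_inj_poly ?mulrz_int; last 2 first.
- exact: intr_inj.
- by [].
apply: eq_bigr => i _; by rewrite expr1n mulr1 coef_map.
Qed.

Lemma homog_yne0 k s t (p : {poly int}) (x y : R) : (t * (size p).-1 <= k * s)%N -> y != 0 ->
  homog k s t p x y = y ^+ (k * s) * (map_poly intr p).[x / y ^+ t].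
Proof.
move=> hd y0.
have -> : homog k s t p x y = homog k s t p (y ^+ t * (x / y ^+ t)) (y * 1).
  by rewrite mulr1 mulrC divfK // expf_neq0.
by rewrite homog_scale // homog_y1.
Qed.

Lemma homog_y0 k s t (p : {poly int}) (x : R) : (t * (size p).-1 = k * s)%N -> (0 < k * s)%N ->
  homog k s t p x 0 = (lead_coef p)%:~R * x ^+ (size p).-1.
Proof.
move=> hd hks.
have : (0 < size p)%N.
  case: (size p) hd => // /=; rewrite muln0 => h; by rewrite -h in hks.
case sp: (size p) => [//|n] _.
rewrite /homog sp big_ord_recr /= big1 ?add0r; last first.
  move=> i _.
  have ht : (0 < t)%N by move: hd hks; rewrite sp /=; case: t => //=; rewrite mul0n => <-.
  have : (0 < k * s - t * i)%N.
    rewrite subn_gt0 -hd sp /= ltn_mul2l ht /=; exact: ltn_ord.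
  by case: (k * s - t * i)%N => // e _; rewrite expr0n /= mulr0.
rewrite lead_coefE sp /= -hd sp /= subnn expr0 mulr1.
done.
Qed.
End S1.
Lemma rat_le (a b c e : nat) : (0 < c)%N -> (0 < e)%N ->
  (a%:R / c%:R <= b%:R / e%:R :> rat) = (a * e <= b * c)%N.
Proof.
move=> c0 e0.
rewrite ler_pdivrMr ?ltr0n // mulrAC ler_pdivlMr ?ltr0n // -!natrM ler_nat.
by rewrite mulnC [(b * c)%N]mulnC.
Qed.

Lemma rat_eq (a b c e : nat) : (0 < c)%N -> (0 < e)%N ->
  (a%:R / c%:R = b%:R / e%:R :> rat) -> (a * e = b * c)%N.
Proof.
move=> c0 e0 h; apply/eqP; rewrite eqn_leq -!rat_le // h lexx.
by [].
Qed.

Lemma deg_facts (u m t : nat) (f g : {poly int}) :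
  (u == 1%N) || (u == 2%N) -> (0 < m)%N -> (0 < t)%N -> (m == 1%N) || (u * t == 1)%N ->
  maxdeg f g = (2 * m)%:R / (u * t)%:R ->
  [/\ (0 < vsig u m)%N, (t * (size f).-1 <= 2 * vsig u m)%N, (t * (size g).-1 <= 3 * vsig u m)%N &
     (f != 0 /\ (t * (size f).-1 = 2 * vsig u m)%N) \/ (g != 0 /\ (t * (size g).-1 = 3 * vsig u m)%N)].
Proof.
move=> hu m0 t0 hm hmax.
have hus : (u * (2 * vsig u m) = 4 * m /\ 0 < u /\ 0 < vsig u m)%N.
  move: hm; rewrite /vsig; case/orP: hu => /eqP -> /=; first lia.
  by case/orP => /eqP; lia.
case: hus => hus [u0 s0].
have ut0 : (0 < u * t)%N by rewrite muln_gt0 u0.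
move: hmax; rewrite /maxdeg /pdeg.
have H2 : (0 < 2)%N by []. have H3 : (0 < 3)%N by [].
have keq : forall a b, (u * a = u * b)%N -> a = b.
  by move=> a b /eqP; rewrite eqn_pmul2l // => /eqP.
have kle : forall a b, (u * a <= u * b)%N -> (a <= b)%N.
  by move=> a b; rewrite leq_pmul2l.
set dF := (size f).-1. set dG := (size g).-1. set sv := vsig u m.
have [f0|fn0] := eqVneq f 0.
  move=> /(rat_eq _ _ _ _ H3 ut0) h.
  have gn0 : g != 0 by apply/eqP => g0; move: h; rewrite /dG g0 size_poly0 /=; lia.
  have e : (t * dG = 3 * sv)%N by apply: keq; lia.
  have dF0 : dF = 0%N by rewrite /dF f0 size_poly0.
  rewrite dF0 muln0; split; [exact: s0 | by [] | lia | right; split; [by [] | exact: e]].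
have [g0|gn0] := eqVneq g 0.
  move=> /(rat_eq _ _ _ _ H2 ut0) h.
  have e : (t * dF = 2 * sv)%N by apply: keq; lia.
  have dG0 : dG = 0%N by rewrite /dG g0 size_poly0.
  rewrite dG0 muln0; split; [exact: s0 | lia | by [] | left; split; [by [] | exact: e]].
rewrite /Order.max; have [le|le] := ltP (dF%:R / 2%:R : rat) (dG%:R / 3%:R).
  move=> h.
  move: (ltW le); rewrite h rat_le // => le'.
  move/(rat_eq _ _ _ _ H3 ut0): h => h.
  have e : (t * dG = 3 * sv)%N by apply: keq; lia.
  have l2 : (t * dF <= 2 * sv)%N by apply: kle; nia.
  split; [exact: s0 | exact: l2 | lia | right; split; [by [] | exact: e]].
move=> h.
move: le; rewrite h rat_le // => le'.
move/(rat_eq _ _ _ _ H2 ut0): h => h.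
have e : (t * dF = 2 * sv)%N by apply: keq; lia.
have l2 : (t * dG <= 3 * sv)%N by apply: kle; nia.
split; [exact: s0 | lia | exact: l2 | left; split; [by [] | exact: e]].
Qed.
Section S2a.
Context {R : realType}.
Local Notation mu := (@lebesgue_measure R).
Lemma bound_main k k' s t (P Q : {poly int}) (c c' : R) :
  (0 < k * s)%N -> (0 < k' * s)%N -> (t * (size P).-1 = k * s)%N ->
  (t * (size Q).-1 <= k' * s)%N ->
  (forall r : R, ~ (root (map_poly intr P) r /\ root (map_poly intr Q) r)) ->
  exists M : R, forall x y : R, `|homog k s t P x y| <= c ->
    `|homog k' s t Q x y| <= c' -> `|x| <= M /\ `|y| <= M.
Proof.
move=> ks0 k's0 hP hQ nr.
pose PR : {poly R} := map_poly intr P.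
pose QR : {poly R} := map_poly intr Q.
have t0 : (0 < t)%N by move: ks0; rewrite -hP muln_gt0 => /andP[].
have [n sP] : exists n, size P = n.+2.
  move: ks0; rewrite -hP; case: (size P) => [|[|n]] //=; rewrite ?muln0 // => _; by exists n.
have sPR : size PR = n.+2 by rewrite size_map_inj_poly //; exact: intr_inj.
have lPR : lead_coef PR = (lead_coef P)%:~R by rewrite lead_coef_map_inj //; exact: intr_inj.
have [K K1 hK] := poly_growth _ _ sPR.
pose l : R := `|lead_coef PR|.
have l0 : 0 < l by rewrite normr_gt0 lead_coef_eq0 -size_poly_eq0 sPR.
pose phi := fun r : R => `|PR.[r]| + `|QR.[r]|.
have K0 : - K <= K by lra.
have cphi : {within `[- K, K], continuous phi}.
  apply: continuous_subspaceT => x.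
  rewrite /phi /continuous_at; apply: cvgD; apply: cvg_norm; exact: continuous_horner.
have [r0 _ hr0] := EVT_min K0 cphi.
pose d : R := phi r0.
have d0 : 0 < d.
  rewrite lt_neqAle addr_ge0 // andbT; apply/eqP => h.
  move: (esym h) => /eqP; rewrite paddr_eq0 // !normr_eq0 => /andP[/eqP h1 /eqP h2].
  by apply: (nr r0); split; apply/rootP.
pose M1 : R := 1 + `|2 * c / d| + `|2 * c' / d|.
pose X : R := 1 + `|2 * c / l|.
pose M : R := M1 + K * M1 ^+ t + (1 + X) + (1 + `|c / l|).
have n1 := normr_ge0 (2 * c / d). have n2 := normr_ge0 (2 * c' / d).
have n3 := normr_ge0 (2 * c / l). have n4 := normr_ge0 (c / l).
have M1ge : 1 <= M1 by rewrite /M1; lra.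
have KM : 0 <= K * M1 ^+ t by rewrite mulr_ge0 ?exprn_ge0 //; lra.
exists M => x y hA hB.
have [y0|y0] := eqVneq y 0.
  rewrite y0 homog_y0 // -lPR normrM normrX sP /= -/l in hA.
  have : `|x| ^+ n.+1 <= c / l by rewrite ler_pdivlMr // mulrC.
  move/(pow_bound _ _ _ (normr_ge0 x) (ltn0Sn n)) => hx.
  rewrite y0 normr0; split; rewrite /M /X; lra.
pose r := x / y ^+ t.
have ytn0 : y ^+ t != 0 by rewrite expf_neq0.
have hxr : x = r * y ^+ t by rewrite /r divfK.
rewrite (@homog_yne0 R _ _ _ _ _ _ (eq_leq hP) y0) -/r normrM normrX in hA.
rewrite (@homog_yne0 R _ _ _ _ _ _ hQ y0) -/r normrM normrX in hB.
have ys0 : 0 <= `|y| ^+ (k * s) by rewrite exprn_ge0.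
have ys0' : 0 <= `|y| ^+ (k' * s) by rewrite exprn_ge0.
have [rK|rK] := leP `|r| K.
  have rin : r \in `[- K, K] by rewrite in_itv /= -ler_norml.
  have := hr0 r rin; rewrite -/d /phi => hd.
  have hy : `|y| <= M1.
    have [hp|hp] := leP (d / 2) `|PR.[r]|.
      have : `|y| ^+ (k * s) <= 2 * c / d.
        rewrite ler_pdivlMr //.
        have : `|y| ^+ (k * s) * (d / 2) <= `|y| ^+ (k * s) * `|PR.[r]| by apply: ler_wpM2l.
        lra.
      move/(pow_bound _ _ _ (normr_ge0 y) ks0) => h; rewrite /M1; lra.
    have hq : d / 2 <= `|QR.[r]| by lra.
    have : `|y| ^+ (k' * s) <= 2 * c' / d.
      rewrite ler_pdivlMr //.
      have : `|y| ^+ (k' * s) * (d / 2) <= `|y| ^+ (k' * s) * `|QR.[r]| by apply: ler_wpM2l.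
      lra.
    move/(pow_bound _ _ _ (normr_ge0 y) k's0) => h; rewrite /M1; lra.
  have hx : `|x| <= K * M1 ^+ t.
    rewrite hxr normrM normrX; apply: ler_pM => //.
    by apply: lerXn2r => //; rewrite nnegrE //; lra.
  split; rewrite /M /X; lra.
have hg := hK r (ltW rK).
rewrite -/l in hg.
have key : `|y| ^+ (k * s) * `|r| ^+ n.+1 = `|x| ^+ n.+1.
  rewrite -hP sP /= exprM -exprMn; congr (_ ^+ _).
  rewrite /r normrM normfV normrX mulrCA divff ?mulr1 //.
  by rewrite expf_neq0 // normr_eq0.
have hx1 : l / 2 * `|x| ^+ n.+1 <= c.
  apply: le_trans hA; rewrite -key.
  have : `|y| ^+ (k * s) * (l / 2 * `|r| ^+ n.+1) <= `|y| ^+ (k * s) * `|PR.[r]| by apply: ler_wpM2l.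
  have e : `|y| ^+ (k * s) * (l / 2 * `|r| ^+ n.+1) = l / 2 * (`|y| ^+ (k * s) * `|r| ^+ n.+1) by ring.
  by rewrite e.
have : `|x| ^+ n.+1 <= 2 * c / l.
  rewrite ler_pdivlMr //; lra.
move/(pow_bound _ _ _ (normr_ge0 x) (ltn0Sn n)) => hx.
have hyt : `|y| ^+ t <= `|x|.
  rewrite hxr normrM normrX; rewrite -{1}[`|y| ^+ t]mul1r; apply: ler_wpM2r; first by rewrite exprn_ge0.
  lra.
have : `|y| ^+ t <= X by rewrite /X; lra.
move/(pow_bound _ _ _ (normr_ge0 y) t0) => hy.
have eX : `|X| = X by rewrite ger0_norm // /X; lra.
rewrite eX in hy.
split; rewrite /M /X; rewrite /X in hy; lra.
Qed.
Lemma leb_scale (a : R) (A : set (measurableTypeR R)) : 0 < a -> measurable A ->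
  mu A = (a%:E * mu (( *%R a) @^-1` A))%E.
Proof.
move=> a0 mA.
unshelve epose proof (@lebesgue_measure_unique R (mscale (NngNum (ltW a0)) (pushforward mu ( *%R a : measurableTypeR R -> measurableTypeR R)))) as H.
2:{ rewrite H //=. move=> X [[c d]] /= _ <-.
  rewrite /mscale /pushforward /=.
  rewrite [X in (_ * mu X)%E](_ : _ = `]c / a, d / a]%classic); last first.
    apply/seteqP; split => x /=; rewrite !in_itv /= => /andP[h1 h2]; apply/andP; split.
    - by rewrite ltr_pdivrMr // mulrC.
    - by rewrite ler_pdivlMr // mulrC.
    - by move: h1; rewrite ltr_pdivrMr // mulrC.
    - by move: h2; rewrite ler_pdivlMr // mulrC.
  rewrite !lebesgue_measure_itv /= !lte_fin ltr_pM2r ?invr_gt0 //.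
  case: ifP => _; last by rewrite mule0.
  rewrite -EFinD -EFinM; congr (_%:E); field; exact: lt0r_neq0. }
 exact: measurable_realfun.mulrl_measurable.
Qed.
Definition hsc (a b : R) (p : measurableTypeR R * measurableTypeR R) : measurableTypeR R * measurableTypeR R := (a * p.1, b * p.2).

Lemma hsc_meas (a b : R) : measurable_fun setT (hsc a b).
Proof.
apply: measurable_fun_pair.
- apply: measurableT_comp; [exact: measurable_realfun.mulrl_measurable | exact: measurable_fst].
- apply: measurableT_comp; [exact: measurable_realfun.mulrl_measurable | exact: measurable_snd].
Qed.
Lemma vol_scale (a b : R) X : 0 < a -> 0 < b -> measurable X ->
  Vol X = ((a * b)%:E * Vol (hsc a b @^-1` X))%E.
Proof.
move=> a0 b0 mX.
have ab0 : 0 <= a * b by rewrite mulr_ge0 // ltW.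
unshelve epose proof (@product_measure_unique _ _ _ _ R mu mu (mscale (NngNum ab0) (pushforward (mu \x mu)%E (hsc a b)))) as H.
2:{ rewrite /Vol H //= => A B mA mB.
  rewrite /mscale /pushforward /=.
  rewrite [X in (_ * X)%E](_ : _ = (mu \x mu)%E ((( *%R a) @^-1` A) `*` (( *%R b) @^-1` B))) //.
  rewrite product_measure1E; last 2 first.
  - by rewrite -[X in measurable X]setTI; apply: measurable_realfun.mulrl_measurable.
  - by rewrite -[X in measurable X]setTI; apply: measurable_realfun.mulrl_measurable.
  rewrite (@leb_scale a A a0 mA) (@leb_scale b B b0 mB) EFinM.
  by rewrite muleACA. }
exact: hsc_meas.
Qed.
Lemma homog_meas k s t p : measurable_fun setT (fun q : R * R => homog k s t p q.1 q.2).
Proof.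
rewrite /homog.
apply: measurable_sum => i.
apply: measurable_realfun.measurable_funM; last first.
  by apply: measurable_realfun.measurable_funX; exact: measurable_snd.
apply: measurable_realfun.measurable_funM; first exact: measurable_cst.
by apply: measurable_realfun.measurable_funX; exact: measurable_fst.
Qed.
Lemma region_meas s t f g (N : R) : measurable (regionN s t f g N).
Proof.
have -> : regionN s t f g N = ([set: R * R] `&` [set q | `|Aform s t f q.1 q.2| <= cst ((N / 4) `^ (1 / 3)) q])
  `&` ([set: R * R] `&` [set q | `|Bform s t g q.1 q.2| <= cst ((N / 27) `^ (1 / 2)) q]).
  by apply/seteqP; split => q /=; rewrite /regionN /= ?setTI; move=> [] //; move=> [_ h1] [_ h2].
apply: measurableI; apply: measurable_fun_le => //; try exact: measurable_cst;
  apply: measurableT_comp => //; try exact: measurable_realfun.normr_measurable; exact: homog_meas.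
Qed.
End S2a.

Section S3.
Context {R : realType}.

Lemma region_scale s t (f g : {poly int}) (N b : R) : 0 < N -> 0 < b ->
  b ^+ (2 * s) = N `^ (1 / 3) -> b ^+ (3 * s) = N `^ (1 / 2) ->
  (t * (size f).-1 <= 2 * s)%N -> (t * (size g).-1 <= 3 * s)%N ->
  forall x y : R, regionN s t f g N (b ^+ t * x, b * y) <-> regionN s t f g 1 (x, y).
Proof.
move=> N0 b0 h2 h3 hf hg x y.
rewrite /regionN /= /Aform /Bform !homog_scale // h2 h3.
have e1 : (N / 4) `^ (1 / 3) = N `^ (1 / 3) * (1 / 4) `^ (1 / 3 : R).
  by rewrite -powRM ?mul1r // ltW.
have e2 : (N / 27) `^ (1 / 2) = N `^ (1 / 2) * (1 / 27) `^ (1 / 2 : R).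
  by rewrite -powRM ?mul1r // ltW.
rewrite e1 e2 !normrM !(gtr0_norm (powR_gt0 _ N0)) !ler_pM2l ?powR_gt0 //.
Qed.

End S3.

Theorem lemma2p3 (R : realType) (u m t : nat) (f g : {poly int}) :
  (u == 1%N) || (u == 2%N) -> (0 < m)%N -> (0 < t)%N ->
  (m == 1%N) || (u * t == 1)%N ->
  4%:R *: f ^+ 3 + 27%:R *: g ^+ 2 != 0 ->
  (forall r : R, ~ (root (map_poly intr f) r /\ root (map_poly intr g) r)) ->
  maxdeg f g = (2 * m)%:R / (u * t)%:R ->
  let s := vsig u m in
  (forall N : R, 0 < N ->
     regionN s t f g N =
     [set (N `^ (t%:R / (6 * s)%:R) * p.1, N `^ (1 / (6 * s)%:R) * p.2)
        | p in regionN s t f g 1]) /\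
  (exists M : R, forall p, regionN s t f g 1 p -> `|p.1| <= M /\ `|p.2| <= M) /\
  (forall N : R, 0 < N ->
     Vol (regionN s t f g N) =
     ((N `^ ((t + 1)%:R / (6 * s)%:R))%:E * Vol (regionN s t f g 1))%E) /\
  (exists C1 C2 : R, forall N : R, 0 < N -> forall p, regionN s t f g N p ->
     `|p.1| <= C1 * N `^ (t%:R / (6 * s)%:R) /\
     `|p.2| <= C2 * N `^ (1 / (6 * s)%:R)).
Proof.
move=> hu m0 t0 hm _ nr hmax s.
have [s0 hf hg hdom] := deg_facts _ _ _ _ _ hu m0 t0 hm hmax.
rewrite -/s in s0 hf hg hdom.
have sR : (s%:R : R) != 0 by rewrite pnatr_eq0 -lt0n.
have scal : forall N : R, 0 < N ->
  [/\ 0 < N `^ (1 / (6 * s)%:R),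
      N `^ (t%:R / (6 * s)%:R) = N `^ (1 / (6 * s)%:R) ^+ t,
      N `^ (1 / (6 * s)%:R) ^+ (2 * s) = N `^ (1 / 3) &
      N `^ (1 / (6 * s)%:R) ^+ (3 * s) = N `^ (1 / 2)].
  move=> N N0; split; first exact: powR_gt0.
  - rewrite -powR_mulrn ?powR_ge0 // -powRrM; congr (_ `^ _).
    by rewrite mul1r mulrC.
  - rewrite -powR_mulrn ?powR_ge0 // -powRrM; congr (_ `^ _).
    by rewrite !natrM; field.
  - rewrite -powR_mulrn ?powR_ge0 // -powRrM; congr (_ `^ _).
    by rewrite !natrM; field.
have part1 : forall N : R, 0 < N ->
     regionN s t f g N =
     [set (N `^ (t%:R / (6 * s)%:R) * p.1, N `^ (1 / (6 * s)%:R) * p.2)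
        | p in regionN s t f g 1].
  move=> N N0; have [b0 ha h2 h3] := scal N N0.
  apply/seteqP; split => [[x y] /= hN | _ [[x y] h1 <-]].
    exists (x / N `^ (1 / (6 * s)%:R) ^+ t, y / N `^ (1 / (6 * s)%:R)).
      apply/(region_scale _ _ _ _ _ _ N0 b0 h2 h3 hf hg).
      rewrite mulrC divfK ?expf_neq0 ?gt_eqF // mulrC divfK ?gt_eqF //.
    by rewrite ha /= mulrC divfK ?expf_neq0 ?gt_eqF // mulrC divfK ?gt_eqF.
  by rewrite /= ha; apply/(region_scale _ _ _ _ _ _ N0 b0 h2 h3 hf hg).
have part2 : exists M : R, forall p, regionN s t f g 1 p -> `|p.1| <= M /\ `|p.2| <= M.
  have k2 : (0 < 2 * s)%N by rewrite muln_gt0 s0.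
  have k3 : (0 < 3 * s)%N by rewrite muln_gt0 s0.
  case: hdom => [[fn0 ef]|[gn0 eg]].
    have [M hM] := @bound_main R 2 3 s t f g ((1 / 4) `^ (1 / 3)) ((1 / 27) `^ (1 / 2)) k2 k3 ef hg nr.
    by exists M => -[x y] [hA hB]; apply: hM.
  have nr' : forall r : R, ~ (root (map_poly intr g) r /\ root (map_poly intr f) r).
    by move=> r [h1 h2]; apply: (nr r).
  have [M hM] := @bound_main R 3 2 s t g f ((1 / 27) `^ (1 / 2)) ((1 / 4) `^ (1 / 3)) k3 k2 eg hf nr'.
  by exists M => -[x y] [hA hB]; apply: hM.
split; first exact: part1.
split; first exact: part2.
split.
  move=> N N0; have [b0 ha h2 h3] := scal N N0.
  have a0 : 0 < N `^ (t%:R / (6 * s)%:R) by apply: powR_gt0.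
  rewrite (vol_scale _ _ _ a0 b0 (region_meas _ _ _ _ _)).
  congr (_ * Vol _)%E.
    by rewrite natrD mulrDl powRD // (gt_eqF N0) implybT.
  apply/seteqP; split => -[x y] /=.
    by rewrite /hsc /= ha => /(region_scale _ _ _ _ _ _ N0 b0 h2 h3 hf hg).
  by rewrite /hsc /= ha => /(region_scale _ _ _ _ _ _ N0 b0 h2 h3 hf hg).
have [M hM] := part2.
exists M, M => N N0 p; rewrite part1 // => -[q /hM [h1 h2] <-] /=.
have [b0 _ _ _] := scal N N0.
have a0 : 0 < N `^ (t%:R / (6 * s)%:R) by apply: powR_gt0.
split.
  rewrite normrM (gtr0_norm a0) mulrC; apply: ler_wpM2r => //; exact: ltW.
rewrite normrM (gtr0_norm b0) mulrC; apply: ler_wpM2r => //; exact: ltW.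
Qed.
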